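(* Let $p$ be an odd prime, $k$ algebraically closed of characteristic $p$, $d=p^2-1$, and let $X$ be the Artin–Schreier curve $y^p-y=-x^{d}-x^{d/2}$ over $k$. Let $k_0$ be an integer with $0\le k_0<\frac{p-1}{2}$ and $l$ an integer with $0\le l\le \frac{d(p/2-1-k_0)-p}{p}$. Then there exists $y^mx^ndx\in\mathcal B_X$ with $m<\frac{p-1}{2}$ such that the largest term of $\mathcal C_X(y^mx^ndx)$ is $y^{k_0}x^ldx$.
   Context: $\mathcal C_X$ is the Cartier operator on $H^0(X,\Omega^1_X)$: the $p^{-1}$-semilinear map with $\mathcal C_X(f^p\alpha+\beta)=f\,\mathcal C_X(\alpha)+\mathcal C_X(\beta)$, $\mathcal C_X(x^{p-1}dx)=dx$, $\mathcal C_X(x^ndx)=0$ for $n\not\equiv-1\pmod p$. For an Artin–Schreier curve $y^p-y=f$ with $f\in k[x]$ of degree $D$ prime to $p$, the set $$\mathcal B_X=\left\{y^ix^jdx:\ 0\le i\le p-2,\ 0\le j\le \left\lceil\tfrac{(p-i-1)D}{p}\right\rceil-2\right\}$$ is a $k$-basis of $H^0(X,\Omega^1_X)$. Order $\mathcal B_X$ lexicographically with $y>x$: $y^ix^jdx>y^ax^bdx$ iff $i>a$, or $i=a$ and $j>b$. The ''largest term'' of a nonzero differential $\omega\in H^0(X,\Omega^1_X)$ is the largest element of $\mathcal B_X$ appearing with nonzero coefficient when $\omega$ is written in the basis $\mathcal B_X$. *)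

(* Defs.v *)
From HB Require Import structures.
From mathcomp Require Import all_boot all_order all_algebra.
Set Implicit Arguments. Unset Strict Implicit. Unset Printing Implicit Defensive.
Import Order.TTheory GRing.Theory Num.Theory.
Local Open Scope ring_scope.

(* Convention: the function field K of X is a field containing k (via iota);
   a meromorphic differential  g dx  is represented by g : K  (dx generates
   the 1-dimensional K-space of differentials since x is separating). *)

Definition ceil_divn (a b : nat) : nat := ((a + b.-1) %/ b)%N.

(* (i,j) indexes an element y^i x^j dx of the basis B_X,
   for the curve y^p - y = f with deg f = D:
   0 <= i <= p-2, 0 <= j <= ceil((p-i-1)D/p) - 2. *)
Definition inBX (p D i j : nat) : bool :=
  [&& (i + 2 <= p)%N & (j + 2 <= ceil_divn ((p - i - 1) * D) p)%N].

(* lexicographic order with y > x : y^i x^j dx > y^a x^b dx *)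
Definition lex_gt (i j a b : nat) : bool :=
  ((a < i)%N || ((i == a) && (b < j)%N)).

Definition largest_term (k : fieldType) (K : fieldType)
  (iota : {rmorphism k -> K}) (p D : nat) (x y w : K) (a b : nat) : Prop :=
  exists c : nat -> nat -> k,
    [/\ forall i j, ~~ inBX p D i j -> c i j = 0,
        w = \sum_(i < p) \sum_(j < D) iota (c i j) * y ^+ i * x ^+ j,
        inBX p D a b, c a b != 0
      & forall i j, lex_gt i j a b -> c i j = 0].

Definition is_cartier (K : fieldType) (p : nat) (x : K) (C : K -> K) : Prop :=
  [/\ forall f al be : K, C (f ^+ p * al + be) = f * C al + C be,
      C (x ^+ p.-1) = 1
    & forall n : nat, (n %% p != p.-1)%N -> C (x ^+ n) = 0].

(* Main.v *)
Require Import Defs.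
From HB Require Import structures.
From mathcomp Require Import all_boot all_order all_algebra.
From mathcomp Require Import zify ring lra.
Import Order.TTheory GRing.Theory Num.Theory.
Local Open Scope ring_scope.

Set Implicit Arguments. Unset Strict Implicit.
Section Cart.
Variables (K : fieldType) (p : nat) (x : K) (C : K -> K).
Hypothesis hC : is_cartier p x C.

Lemma C_add a b : C (a + b) = C a + C b.
Proof. case: hC => h1 _ _; have := h1 1 a b; rewrite expr1n !mul1r; exact. Qed.

Lemma C_0 : C 0 = 0.
Proof. have h := C_add 0 0; rewrite addr0 in h.
by apply: (addrI (C 0)); rewrite addr0 -h. Qed.

Lemma C_sum (I : Type) (r : seq I) (P : pred I) (F : I -> K) :
  C (\sum_(i <- r | P i) F i) = \sum_(i <- r | P i) C (F i).
Proof. exact: (big_morph C C_add C_0). Qed.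

Lemma C_muln a n : C (a *+ n) = C a *+ n.
Proof. elim: n => [|n IH]; first by rewrite !mulr0n C_0. by rewrite !mulrS C_add IH. Qed.

Lemma C_frob b a : C (b ^+ p * a) = b * C a.
Proof. case: hC => h1 _ _; have := h1 b a 0; rewrite !addr0 C_0 addr0; exact. Qed.

Lemma C_x N : C (x ^+ N) = if (N %% p == p.-1)%N then x ^+ (N %/ p) else 0.
Proof.
case: hC => _ h2 h3.
rewrite {1}(divn_eq N p) exprD exprM C_frob.
case: ifP => h.
  by rewrite (eqP h) h2 mulr1.
by rewrite h3 ?mulr0 // modn_mod h.
Qed.
End Cart.


Lemma widen_sum (V : nmodType) (a b : nat) (F : nat -> V) :
  (a <= b)%N -> (forall i, (a <= i)%N -> (i < b)%N -> F i = 0) ->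
  \sum_(i < a) F i = \sum_(i < b) F i.
Proof.
move=> hab hF; rewrite -!(big_mkord xpredT) (big_cat_nat (leq0n a) hab) /=.
rewrite [X in _ = _ + X]big_nat_cond [X in _ = _ + X]big1 ?addr0 // => i /andP[/andP[h1 h2] _].
exact: hF.
Qed.

Lemma prime_ndvd_fact p m : prime p -> (m < p)%N -> ~~ (p %| m`!)%N.
Proof.
move=> pp; elim: m => [|m IH] hm; first by rewrite fact0 dvdn1; apply/negP => /eqP h; rewrite h in pp.
rewrite factS Euclid_dvdM // negb_or IH ?andbT; last by apply: ltnW.
apply/negP => /(dvdn_leq (ltn0Sn m)); rewrite leqNgt hm //.
Qed.

Lemma prime_ndvd_bin p m k : prime p -> (m < p)%N -> (k <= m)%N -> ~~ (p %| 'C(m, k))%N.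
Proof.
move=> pp hm hk; apply/negP => hd.
have := @prime_ndvd_fact p m pp hm; rewrite -(bin_fact hk).
by rewrite (dvdn_mulr _ hd).
Qed.

Lemma term0 (B : nat) (b1 b2 : bool) : (B != 0%N -> b1 -> b2 -> False) -> (B * b1 * b2 = 0)%N.
Proof.
case: b1; case: b2; rewrite ?muln0 // !muln1 => h.
by apply/eqP; apply/negPn/negP => /h; apply.
Qed.
Lemma exp_arith (e a t n : nat) : (t <= a)%N -> (n + e * (a + t) = e * (a - t) + 2 * e * t + n)%N.
Proof. move=> h; rewrite -{1}(subnK h); lia. Qed.
Lemma term_eq0 (K : fieldType) (A B Y X a b : K) :
  A * B * b * Y * X * a = Y * (A * B * X) * (a * b).
Proof. ring. Qed.

Lemma term_eq (K : fieldType) (A B Y1 Y2 X : K) (c1 c2 : nat) : Y1 = Y2 ->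
  A * B *+ c2 * Y1 * X *+ c1 = Y2 * (A * B * X) *+ (c1 * c2)%N.
Proof. move=> ->; rewrite !mulrnAl mulrnA mulrnAC; congr (_ *+ _ *+ _); ring. Qed.
Unset Implicit Arguments.

Theorem mainTheorem8
  (p : nat) (hp : prime p) (hodd : odd p)
  (k : closedFieldType) (hchar : p \in [pchar k])
  (K : fieldType) (iota : {rmorphism k -> K})
  (x y : K)
  (hcurve : y ^+ p - y = - x ^+ (p ^ 2 - 1) - x ^+ ((p ^ 2 - 1) %/ 2))
  (hindep : forall c : nat -> nat -> k,
      \sum_(i < p) \sum_(j < p ^ 2 - 1) iota (c i j) * y ^+ i * x ^+ j = 0 ->
      forall i j, (i < p)%N -> (j < p ^ 2 - 1)%N -> c i j = 0)
  (C : K -> K) (hC : is_cartier p x C)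
  (k0 l : nat) (hk0 : (2 * k0 < p - 1)%N)
  (hl : (l%:Q <= (((p ^ 2 - 1)%N)%:Q * (p%:Q / 2 - 1 - k0%:Q) - p%:Q) / p%:Q)) :
  exists m n : nat,
    [/\ inBX p (p ^ 2 - 1) m n, (2 * m < p - 1)%N
      & largest_term iota p (p ^ 2 - 1) x y (C (y ^+ m * x ^+ n)) k0 l].
Proof.
clear hindep.
have pgt1 := prime_gt1 hp.
have p0 : (0 < p)%N by lia.
set d := (p ^ 2 - 1)%N in hcurve hl *.
set e := (d %/ 2)%N in hcurve.
pose q := (p %/ 2)%N.
have hpq : p = (q * 2 + 1)%N.
  by rewrite {1}(divn_eq p 2) modn2 hodd.
have hd : d = (4 * q * q + 4 * q)%N.
  rewrite /d -mulnn {1 2}hpq; nia.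
have hde : d = (2 * e)%N by rewrite /e hd; lia.
have he : e = (q * p + q)%N by rewrite hpq; lia.
have q0 : (0 < q)%N by lia.
have e0 : (0 < e)%N by nia.
clearbody e d.
have hlN : (2 * l * p + 2 * p + 2 * d + 2 * d * k0 <= d * p)%N.
  rewrite -(@ler_nat rat) !natrD !natrM.
  move: hl; rewrite ler_pdivlMr ?ltr0n // => hl.
  lra.
pose L := (l * p + p.-1)%N.
have hLmod : (L %% p = p.-1)%N by rewrite /L modnMDl modn_small // prednK.
have hLdiv : (L %/ p = l)%N by rewrite /L divnMDl // divn_small ?addn0 // prednK.
have hLdef : (L = l * p + p.-1)%N by [].
clearbody L.
pose v := (L %/ e)%N.
pose n := (L %% e)%N.
have hL : L = (n + e * v)%N by rewrite /n /v {1}(divn_eq L e) addnC mulnC.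
have hn : (n < e)%N by rewrite /n ltn_pmod.
clearbody v n.
have hv : (v + 3 + 2 * k0 <= p)%N.
  have : (e * (v + 2 + 2 * k0) < e * p)%N.
    have h1 : (l * p + p + 2 * e + 2 * e * k0 <= e * p)%N.
      move: hlN; rewrite hde; lia.
    have h2 : (L + 1 = l * p + p)%N by rewrite hLdef; lia.
    rewrite !mulnDr; lia.
  by rewrite ltn_pmul2l //; lia.
clear hl hlN.
pose s := (v.+1 %/ 2)%N.
have hs : (v = 2 * s \/ v + 1 = 2 * s)%N by rewrite /s; lia.
clearbody s.
pose m := (k0 + s)%N.
have hm : m = (k0 + s)%N by [].
clearbody m.
pose t0 := (v - s)%N.
have ht0 : (t0 + s = v)%N by rewrite /t0; lia.
clearbody t0.
have hm2 : (2 * m < p - 1)%N by lia.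
have hmq : (m < q)%N by lia.
pose N := fun i t => (n + e * (m - i + t))%N.
have hmod : forall dl, (0 < dl < p)%N -> ~~ (p %| e * dl)%N.
  move=> dl /andP[h1 h2].
  have -> : (e * dl = (q * dl) * p + q * dl)%N by rewrite he; lia.
  rewrite dvdn_addr; last by apply: dvdn_mull.
  rewrite Euclid_dvdM // negb_or.
  by apply/andP; split; apply/negP => /dvdn_leq; lia.
have hmod2 : forall a b dl, (a + e * dl = b)%N -> (0 < dl < p)%N ->
    (a %% p = p.-1)%N -> (b %% p = p.-1)%N -> False.
  move=> a b dl hab hdl ha hb; apply: (negP (hmod dl hdl)).
  have : (b == a %[mod p])%N by rewrite ha hb.
  by rewrite eqn_mod_dvd -hab ?leq_addr // addKn.
have hcond : forall i t, (i <= m)%N -> (t <= m - i)%N -> (N i t %% p = p.-1)%N ->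
    (i <= k0)%N /\ (i = k0 -> t = t0).
  move=> i t hi ht hN.
  case: (leqP i k0) => hik.
    split => // hik0; subst i.
    case: (ltngtP t t0) => htt //; exfalso.
      apply: (hmod2 (N k0 t) L (t0 - t)%N) => //; last by lia.
      rewrite /N hm addKn -addnA -mulnDr hL -ht0; congr (_ + e * _); lia.
    apply: (hmod2 L (N k0 t) (t - t0)%N) => //; last by lia.
    rewrite /N hm addKn hL -addnA -mulnDr -ht0; congr (_ + e * _); lia.
  exfalso.
  apply: (hmod2 (N i t) L (v - (m - i + t))%N) => //; last by lia.
  rewrite /N hL -addnA -mulnDr; congr (_ + e * _); lia.
have hbnd : forall i t, (i <= m)%N -> (t <= m - i)%N -> (N i t %% p = p.-1)%N ->
    inBX p d i (N i t %/ p) /\ (N i t %/ p < d)%N.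
  move=> i t hi ht hN.
  have hNj : N i t = (N i t %/ p * p + p.-1)%N by rewrite {1}(divn_eq (N i t) p) hN.
  move: hNj; set j := (N i t %/ p)%N => hNj.
  have hNle : (N i t + 1 <= e + 2 * e * (m - i))%N.
    rewrite /N; have : (e * (m - i + t) <= e * (2 * (m - i)))%N.
      by rewrite leq_mul2l; apply/orP; right; lia.
    lia.
  have hh : (2 * e * (m - i) + 2 * e <= (p - i - 1) * d)%N.
    have -> : (p - i - 1 = (m - i) + (p - 1 - m))%N by lia.
    rewrite hde mulnDl; have : (2 * e <= (p - 1 - m) * (2 * e))%N.
      by rewrite leq_pmull //; lia.
    rewrite [((m - i) * _)%N]mulnC mulnA; lia.
  have e2 : (2 <= e)%N by lia.
  have hjp : ((j + 2) * p <= (p - i - 1) * d + p.-1)%N.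
    move: hNj hNle hh e2 pgt1; clearbody j; clear -j; lia.
  split.
    rewrite /inBX /ceil_divn; apply/andP; split; first by lia.
    by rewrite leq_divRL.
  have : ((p - i - 1) * d <= p * d)%N by apply: leq_mul; lia.
  move=> h3; have : ((j + 2) * p < (d + 1) * p)%N by lia.
  rewrite ltn_pmul2r //; lia.
have hBnz : forall i t, ('C(m, i) * 'C(m - i, t) != 0)%N -> (i <= m)%N /\ (t <= m - i)%N.
  by move=> i t; rewrite muln_eq0 negb_or -!lt0n !bin_gt0 => /andP[].
have hy : y = (x ^+ e + x ^+ d) + y ^+ p.
  have -> : x ^+ e + x ^+ d + y ^+ p = y + (y ^+ p - y - (- x ^+ d - x ^+ e)) by ring.
  by rewrite hcurve subrr addr0.
have hexp : y ^+ m * x ^+ n = \sum_(r < m.+1) \sum_(t < (m - r).+1)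
    ((y ^+ r) ^+ p * x ^+ (N r t)) *+ ('C(m, r) * 'C(m - r, t)).
  rewrite {1}hy exprDn big_distrl; apply: eq_bigr => r _ /=.
  rewrite exprDn mulrnAl big_distrl big_distrl /= -sumrMnl.
  apply: eq_bigr => t _.
  have ht : (t <= m - r)%N by rewrite -ltnS.
  have -> : x ^+ (N r t) = (x ^+ e) ^+ (m - r - t) * (x ^+ d) ^+ t * x ^+ n.
    by rewrite -!exprM -!exprD /N hde exp_arith.
  by apply: term_eq; rewrite exprAC.
have hC2 : C (y ^+ m * x ^+ n) = \sum_(r < p) \sum_(t < p)
    (y ^+ r * C (x ^+ (N r t))) *+ ('C(m, r) * 'C(m - r, t)).
  rewrite hexp (C_sum hC).
  transitivity (\sum_(r < m.+1) \sum_(t < p)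
      (y ^+ r * C (x ^+ (N r t))) *+ ('C(m, r) * 'C(m - r, t))).
    apply: eq_bigr => r _; rewrite (C_sum hC).
    under eq_bigr => t _ do rewrite (C_muln hC) (C_frob hC).
    apply: (@widen_sum _ _ _ (fun t : nat => (y ^+ r * C (x ^+ N r t)) *+ ('C(m, r) * 'C(m - r, t)))).
      apply: leq_ltn_trans (leq_subr _ _) _; lia.
    by move=> t ht _; rewrite (bin_small ht) muln0 mulr0n.
  apply: (@widen_sum _ _ _ (fun r : nat => \sum_(t < p) (y ^+ r * C (x ^+ N r t)) *+ ('C(m, r) * 'C(m - r, t)))).
    lia.
  by move=> r hr _; apply: big1 => t _; rewrite (bin_small hr) mul0n mulr0n.
have hNL : N k0 t0 = L by rewrite /N hm addKn [(s + t0)%N]addnC ht0 hL.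
have ht0s : (t0 <= m - k0)%N by rewrite hm addKn; lia.
have hk0m : (k0 <= m)%N by lia.
exists m, n; split => //.
  rewrite /inBX /ceil_divn; apply/andP; split; first by lia.
  rewrite leq_divRL //.
  have h1 : ((n + 2) * p <= (e + 1) * p)%N by rewrite leq_mul2r; apply/orP; right; lia.
  have h2 : ((q + 1) * (2 * e) <= (p - m - 1) * d)%N by rewrite hde leq_mul2r; apply/orP; right; lia.
  have h3 : (e * p = 2 * q * e + e)%N by rewrite hpq; lia.
  lia.
pose c := fun i j : nat => (\sum_(t < p) ((('C(m, i) * 'C(m - i, t)) *
   (N i t %% p == p.-1) * (N i t %/ p == j))%N)%:R : k).
exists c; split.
- move=> i j hij; rewrite /c big1 // => t _; rewrite term0 ?mulr0n // => hB hc1 /eqP hj.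
  have [hi ht] := hBnz _ _ hB.
  have [hin _] := hbnd i t hi ht (eqP hc1).
  by rewrite hj in hin; rewrite hin in hij.
- rewrite hC2; apply: eq_bigr => i _; symmetry.
  under eq_bigr => j _ do rewrite rmorph_sum /= !big_distrl /=.
  rewrite exchange_big /=; apply: eq_bigr => t _.
  under eq_bigr => j _ do rewrite rmorph_nat.
  rewrite (C_x hC).
  have [hB0|hB] := eqVneq ('C(m, i) * 'C(m - i, t))%N 0%N.
    rewrite hB0 [in RHS]mulr0n; apply: big1 => j _; rewrite !mul0n mulr0n !mul0r //.
  case: (boolP (N i t %% p == p.-1)%N) => hc1 /=; last first.
    rewrite [in RHS]mulr0 [in RHS]mul0rn; apply: big1 => j _; rewrite muln0 mul0n mulr0n !mul0r //.
  have [hi ht] := hBnz _ _ hB.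
  have [_ hlt] := hbnd i t hi ht (eqP hc1).
  rewrite (bigD1 (Ordinal hlt)) //= big1 ?addr0.
    by rewrite eqxx /= !muln1 -mulrA mulr_natl.
  move=> j hj; rewrite (_ : (N i t %/ p == j)%N = false) ?muln0 ?mulr0n ?mul0r //.
  apply/negbTE; apply: contra hj => /eqP h; apply/eqP; apply: val_inj => /=; by rewrite -h.
- have [] := hbnd k0 t0 hk0m ht0s; first by rewrite hNL.
  by rewrite hNL hLdiv.
- have ht0p : (t0 < p)%N by lia.
  rewrite /c (bigD1 (Ordinal ht0p)) //= big1 ?addr0.
    rewrite hNL hLmod hLdiv !eqxx /= !muln1.
    rewrite -(dvdn_pcharf hchar) Euclid_dvdM // negb_or !prime_ndvd_bin //; lia.
  move=> t htne; rewrite term0 ?mulr0n // => hB hc1 hc2.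
  have [hi ht] := hBnz _ _ hB.
  have [_ h] := hcond k0 t hi ht (eqP hc1).
  move: htne => /eqP; apply; apply: val_inj; exact: h.
- move=> i j; rewrite /lex_gt => hij.
  rewrite /c big1 // => t _; rewrite term0 ?mulr0n // => hB hc1 hc2.
  have [hi ht] := hBnz _ _ hB.
  have [hik h] := hcond i t hi ht (eqP hc1).
  case/orP: hij => [hki | /andP[/eqP hik0 hlj]]; first by lia.
  subst i; have ht' := h erefl.
  by move: hc2; rewrite ht' hNL hLdiv => /eqP hl'; lia.
Qed.
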